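(* Consider a $k$-stage screening process over a finite set $\mathcal X$ of groups in which all tests are minimally effective, i.e. $\tau^i_{X1}>\tau^i_{X0}\ge0$ for all $X\in\mathcal X$, $i\in[k]$. Among promotion policies satisfying Equal Opportunity (for which precision is defined), the maximum interview efficiency is attained by the Opportunity Ratio policy, and it equals $$\frac{\|q\|_1}{\|q\|_1+\sum_{X\in\mathcal X}u_X\prod_{i=1}^k(\tau^i_{X0}/\tau^i_{X1})}.$$
   Context: Each group $X$ has base rate $q_X$ (probability a member is qualified), $u_X=1-q_X$, and $\|q\|_1=\sum_Xq_X$. At stage $i$, $\tau^i_{X1}$ (resp. $\tau^i_{X0}$) is the probability a qualified (resp. unqualified) member of group $X$ passes test $i$. A policy specifies $\pi^i_{X1},\pi^i_{X0}\in[0,1]$, the probabilities that a member of $X$ who passes (resp. fails) test $i$ is promoted to stage $i+1$ (promotion depends only on group and current test outcome). Let $M_X=\prod_{i=1}^k(\tau^i_{X1}\pi^i_{X1}+(1-\tau^i_{X1})\pi^i_{X0})$ and $N_X=\prod_{i=1}^k(\tau^i_{X0}\pi^i_{X1}+(1-\tau^i_{X0})\pi^i_{X0})$ (probabilities that a qualified, resp. unqualified, member of $X$ reaches the final interview). The policy satisfies Equal Opportunity if $M_X$ is the same for all $X$. Interview efficiency (precision) is $\frac{\sum_Xq_XM_X}{\sum_X(q_XM_X+u_XN_X)}$, defined when the denominator is positive. Opportunity Ratio policy: let $X^*=\arg\min_X\prod_j\tau^j_{X1}$ and $\rho_X=\prod_{j=1}^k\tau^j_{X^*1}/\tau^j_{X1}$;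 set $\pi^1_{X1}=\rho_X$, $\pi^1_{X0}=0$, and $\pi^i_{X1}=1,\pi^i_{X0}=0$ for $i\ge2$. *)

(* Defs.v *)
From mathcomp Require Import all_boot all_order all_algebra.
Set Implicit Arguments. Unset Strict Implicit. Unset Printing Implicit Defensive.
Import Order.TTheory GRing.Theory Num.Theory.
Local Open Scope ring_scope.

Section Screening.
Variables (R : realFieldType) (G : finType) (k : nat).

(* A policy: pi1 X i (resp. pi0 X i) = probability that a member of X who
   passes (resp. fails) test i is promoted to stage i+1. Stages are 'I_k. *)
Definition valid_policy (pi1 pi0 : G -> 'I_k -> R) : Prop :=
  forall X i, 0 <= pi1 X i <= 1 /\ 0 <= pi0 X i <= 1.

(* M_X (with tau = tau1) and N_X (with tau = tau0). *)
Definition reach_prob (tau : 'I_k -> G -> R) (pi1 pi0 : G -> 'I_k -> R) (X : G) : R :=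
  \prod_(i < k) (tau i X * pi1 X i + (1 - tau i X) * pi0 X i).

Definition equal_opportunity (tau1 : 'I_k -> G -> R) (pi1 pi0 : G -> 'I_k -> R) : Prop :=
  forall X Y, reach_prob tau1 pi1 pi0 X = reach_prob tau1 pi1 pi0 Y.

Definition precision_denom (q : G -> R) (tau1 tau0 : 'I_k -> G -> R)
  (pi1 pi0 : G -> 'I_k -> R) : R :=
  \sum_X (q X * reach_prob tau1 pi1 pi0 X + (1 - q X) * reach_prob tau0 pi1 pi0 X).

Definition precision_defined q tau1 tau0 pi1 pi0 : Prop :=
  0 < precision_denom q tau1 tau0 pi1 pi0.

Definition efficiency (q : G -> R) (tau1 tau0 : 'I_k -> G -> R)
  (pi1 pi0 : G -> 'I_k -> R) : R :=
  (\sum_X q X * reach_prob tau1 pi1 pi0 X) / precision_denom q tau1 tau0 pi1 pi0.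

(* Opportunity Ratio policy, given a minimiser Xs of prod_j tau^j_{X1}. *)
Definition rho (tau1 : 'I_k -> G -> R) (Xs X : G) : R :=
  \prod_(j < k) (tau1 j Xs / tau1 j X).

Definition OR_pi1 (tau1 : 'I_k -> G -> R) (Xs : G) : G -> 'I_k -> R :=
  fun X i => if val i == 0%N then rho tau1 Xs X else 1.

Definition OR_pi0 : G -> 'I_k -> R := fun _ _ => 0.

End Screening.

(* Main.v *)
Require Import Defs.
From mathcomp Require Import all_boot all_order all_algebra.
From mathcomp Require Import ring lra.
Import Order.TTheory GRing.Theory Num.Theory.
Local Open Scope ring_scope.

Lemma stage_ineq (R : realFieldType) (a b p1 p0 : R) :
  0 <= a -> a < b -> b <= 1 -> 0 <= p1 <= 1 -> 0 <= p0 <= 1 ->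
  0 <= a / b * (b * p1 + (1 - b) * p0) <= a * p1 + (1 - a) * p0.
Proof.
move=> ha hab hb /andP[h1 h1'] /andP[h0 h0'].
have bpos : 0 < b by apply: le_lt_trans hab.
set c := a / b.
have hc : c * b = a by rewrite /c mulfVK // gt_eqF.
have c0 : 0 <= c by rewrite /c divr_ge0 // ltW.
have c1 : c <= 1 by rewrite /c ler_pdivrMr // mul1r ltW.
rewrite -hc; apply/andP; split.
  apply: mulr_ge0 => //; apply: addr_ge0; apply: mulr_ge0 => //; lra.
nra.
Qed.

Lemma cross (R : realFieldType) (a b c d : R) :
  0 < b -> 0 < d -> a * d <= c * b -> a / b <= c / d.
Proof.
move=> hb hd h; rewrite ler_pdivrMr // mulrAC ler_pdivlMr //.
Qed.

Lemma prod_c_gen (R : realFieldType) (G : finType) k (t1 : 'I_k -> G -> R) Xs X :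
  \prod_(i < k) (if val i == 0%N then rho t1 Xs X else 1) = rho t1 Xs X.
Proof.
case: k t1 => [|k'] t1; first by rewrite big_ord0 /rho big_ord0.
by rewrite big_ord_recl /= big1 ?mulr1.
Qed.

Theorem mainTheorem11 (R : realFieldType) (G : finType) (k : nat)
  (q : G -> R) (tau1 tau0 : 'I_k -> G -> R)
  (hq : forall X, 0 <= q X <= 1)
  (hq_pos : 0 < \sum_X q X)
  (htau : forall i X, [/\ 0 <= tau0 i X, tau0 i X < tau1 i X & tau1 i X <= 1])
  (Xs : G) (hXs : forall X, \prod_(i < k) tau1 i Xs <= \prod_(i < k) tau1 i X) :
  [/\ valid_policy (OR_pi1 tau1 Xs) (@OR_pi0 R G k),
      equal_opportunity tau1 (OR_pi1 tau1 Xs) (@OR_pi0 R G k),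
      precision_defined q tau1 tau0 (OR_pi1 tau1 Xs) (@OR_pi0 R G k),
      efficiency q tau1 tau0 (OR_pi1 tau1 Xs) (@OR_pi0 R G k)
        = (\sum_X q X) /
          (\sum_X q X + \sum_X (1 - q X) * \prod_(i < k) (tau0 i X / tau1 i X))
    & forall pi1 pi0 : G -> 'I_k -> R,
        valid_policy pi1 pi0 -> equal_opportunity tau1 pi1 pi0 ->
        precision_defined q tau1 tau0 pi1 pi0 ->
        efficiency q tau1 tau0 pi1 pi0
          <= efficiency q tau1 tau0 (OR_pi1 tau1 Xs) (@OR_pi0 R G k)].
Proof.
have t1pos : forall i X, 0 < tau1 i X.
  by move=> i X; case: (htau i X) => h0 h01 _; apply: le_lt_trans h01.
have P1pos : forall X, 0 < \prod_(i < k) tau1 i X.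
  by move=> X; apply: prodr_gt0 => i _.
set r := fun X => \prod_(i < k) (tau0 i X / tau1 i X).
have r0 : forall X, 0 <= r X.
  move=> X; apply: prodr_ge0 => i _; case: (htau i X) => h0 h01 _.
  by rewrite divr_ge0 // ltW.
set S := \sum_X q X.
have hS : 0 < S by [].
set T := \sum_X (1 - q X) * r X.
have T0 : 0 <= T.
  apply: sumr_ge0 => X _; apply: mulr_ge0 => //; case/andP: (hq X) => ? ?; lra.
have ST : 0 < S + T by apply: ltr_wpDr.
set m := \prod_(i < k) tau1 i Xs.
have rho_eq : forall X, rho tau1 Xs X = m / \prod_(i < k) tau1 i X.
  by move=> X; rewrite /rho prodf_div.
have prod_c : forall X, \prod_(i < k) (if val i == 0%N then rho tau1 Xs X else 1)
    = rho tau1 Xs X.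
  by move=> X; apply: prod_c_gen.
have reachOR : forall tau X, reach_prob tau (OR_pi1 tau1 Xs) (@OR_pi0 R G k) X
    = \prod_(i < k) tau i X * rho tau1 Xs X.
  move=> tau X; rewrite /reach_prob /OR_pi0 -prod_c -big_split /=.
  by apply: eq_bigr => i _; rewrite mulr0 addr0 /OR_pi1.
have M_OR : forall X, reach_prob tau1 (OR_pi1 tau1 Xs) (@OR_pi0 R G k) X = m.
  by move=> X; rewrite reachOR rho_eq mulrC mulfVK // gt_eqF.
have N_OR : forall X, reach_prob tau0 (OR_pi1 tau1 Xs) (@OR_pi0 R G k) X = m * r X.
  move=> X; rewrite reachOR rho_eq /r prodf_div.
  by rewrite mulrC mulrAC -mulrA.
have mpos : 0 < m by apply: P1pos.
have den_OR : precision_denom q tau1 tau0 (OR_pi1 tau1 Xs) (@OR_pi0 R G k)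
    = m * (S + T).
  rewrite /precision_denom mulrDr /S /T !mulr_sumr -big_split /=.
  by apply: eq_bigr => X _; rewrite M_OR N_OR; ring.
have eff_OR : efficiency q tau1 tau0 (OR_pi1 tau1 Xs) (@OR_pi0 R G k) = S / (S + T).
  rewrite /efficiency den_OR.
  under eq_bigr => X _ do rewrite M_OR.
  rewrite -mulr_suml -/S mulrC; field; apply/andP; split; rewrite gt_eqF //.
split => //.
- move=> X i; rewrite /OR_pi1 /OR_pi0 lexx ler01; split => //.
  case: ifP => _; last by rewrite ler01 lexx.
  rewrite rho_eq; apply/andP; split; first by rewrite divr_ge0 // ltW.
  by rewrite ler_pdivrMr // mul1r.
- by move=> X Y; rewrite !M_OR.
- by rewrite /precision_defined den_OR mulr_gt0.
move=> pi1 pi0 hv heo hpd; rewrite eff_OR.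
set M := reach_prob tau1 pi1 pi0 Xs.
have hM : forall X, reach_prob tau1 pi1 pi0 X = M by move=> X; apply: heo.
have hN : forall X, M * r X <= reach_prob tau0 pi1 pi0 X.
  move=> X; rewrite -(hM X) /r /reach_prob mulrC -big_split /=.
  apply: ler_prod => i _; case: (htau i X) => h0 h01 h1; case: (hv X i) => hp1 hp0.
  by apply: stage_ineq.
have M0 : 0 <= M.
  rewrite /M /reach_prob; apply: prodr_ge0 => i _.
  case: (htau i Xs) => h0 h01 h1; case: (hv Xs i) => /andP[? ?] /andP[? ?].
  apply: addr_ge0; apply: mulr_ge0 => //; lra.
have hD : M * (S + T) <= precision_denom q tau1 tau0 pi1 pi0.
  rewrite /precision_denom mulrDr /S /T !mulr_sumr -big_split /=.
  apply: ler_sum => X _; rewrite hM.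
  have hu : 0 <= 1 - q X by case/andP: (hq X) => ? ?; lra.
  have := ler_wpM2l hu (hN X); nra.
rewrite /efficiency; apply: cross => //.
under eq_bigr => X _ do rewrite hM.
rewrite -mulr_suml -/S.
have S0 : 0 <= S by apply: ltW.
have := ler_wpM2l S0 hD; nra.
Qed.
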